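(* Let $n\ge 1$, let $K:(0,\infty)\to(0,\infty)$ be a smooth function, and let $\Phi$ be an antiderivative of $\sqrt{K}$ on $(0,\infty)$ (for instance $\Phi(\varrho)=\int_0^\varrho\sqrt{K(s)}\,ds$ when this integral converges). Let $\varphi:(0,\infty)\to\mathbb{R}$ and $F:(0,\infty)\to\mathbb{R}$ be smooth functions satisfying $$\sqrt{\varrho}\,\varphi'(\varrho)=\sqrt{K(\varrho)},\qquad F'(\varrho)=\sqrt{K(\varrho)\,\varrho}\qquad(\varrho>0).$$ Then for every smooth positive function $\varrho:\Omega\to(0,\infty)$ on an open set $\Omega\subset\mathbb{R}^n$, $$\varrho\,\nabla\Bigl(\sqrt{K(\varrho)}\,\Delta\bigl(\Phi(\varrho)\bigr)\Bigr)={\rm div}\Bigl(F(\varrho)\,\nabla\nabla\varphi(\varrho)\Bigr)-\nabla\Bigl(\bigl(F(\varrho)-\varrho F'(\varrho)\bigr)\,\Delta\varphi(\varrho)\Bigr)$$ holds on $\Omega$.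
   Context: $\nabla\nabla\varphi(\varrho)$ denotes the Hessian matrix of the function $x\mapsto\varphi(\varrho(x))$, and ${\rm div}$ of a matrix field $M$ is the vector field with components $({\rm div} M)_i=\sum_j\partial_j M_{ij}$. $\Delta$ is the Laplacian. In the special case $K(\varrho)=c/\varrho$ this identity reduces to the quantum Bohm identity $2\varrho\,{\rm div}(\Delta\sqrt{\varrho}/\sqrt{\varrho})={\rm div}(\varrho\nabla\nabla\log\varrho)$ (up to the constant $c$). *)

(* Defs.v *)
From HB Require Import structures.
From mathcomp Require Import all_boot all_order all_algebra.
From mathcomp Require Import all_classical all_reals all_analysis.
Set Implicit Arguments. Unset Strict Implicit. Unset Printing Implicit Defensive.
Import Order.TTheory GRing.Theory Num.Theory.
Import numFieldNormedType.Exports.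
Local Open Scope ring_scope.

Definition ebasis (R : realType) (n : nat) (i : 'I_n) : 'rV[R]_n :=
  delta_mx 0 i.

Definition partial (R : realType) (n : nat) (i : 'I_n) (f : 'rV[R]_n -> R)
  : 'rV[R]_n -> R :=
  fun x => derive f x (ebasis R i).

Fixpoint iter_partial (R : realType) (n : nat) (s : seq 'I_n)
  (f : 'rV[R]_n -> R) : 'rV[R]_n -> R :=
  match s with
  | [::] => f
  | i :: s' => partial i (iter_partial s' f)
  end.

Definition smooth_on (R : realType) (n : nat) (Omega : set 'rV[R]_n)
  (f : 'rV[R]_n -> R) : Prop :=
  forall (s : seq 'I_n) (x : 'rV[R]_n), Omega x ->
    {for x, continuous (iter_partial s f)} /\
    (forall i : 'I_n, derivable (iter_partial s f) x (ebasis R i)).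

Definition smooth_pos (R : realType) (g : R -> R) : Prop :=
  forall (k : nat) (r : R), 0 < r -> derivable (derive1n k g) r 1.

Definition laplacian (R : realType) (n : nat) (f : 'rV[R]_n -> R)
  : 'rV[R]_n -> R :=
  fun x => \sum_(i < n) partial i (partial i f) x.

(* Main.v *)
Require Import Defs.
From HB Require Import structures.
From mathcomp Require Import all_boot all_order all_algebra.
From mathcomp Require Import all_classical all_reals all_analysis.
From mathcomp Require Import ring lra.
Import Order.TTheory GRing.Theory Num.Theory.
Import numFieldNormedType.Exports.
Local Open Scope ring_scope.

Section Gen.
Variable R : realType.
Section V.
Variable V : normedModType R.
Implicit Types (f u : V -> R) (x v y : V).

Lemma line_fun f v y s0 :
  (fun h : R => h^-1 *: ((f \o shift (s0 *: v + y)) (h *: v) - f (s0 *: v + y))) =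
  (fun h : R => h^-1 *: (((fun s : R => f (s *: v + y)) \o shift s0) (h *: 1)
      - (fun s : R => f (s *: v + y)) s0)).
Proof.
apply/funext => h /=; rewrite scalerDl addrA.
by have -> : (h *: 1 : R) = h by rewrite /GRing.scale /= mulr1.
Qed.

Lemma line_is_derive f v y s0 : derivable f (s0 *: v + y) v ->
  is_derive s0 (1:R) (fun s : R => f (s *: v + y)) ('D_v f (s0 *: v + y)).
Proof.
move=> d; split; last by rewrite /derive line_fun.
by move: d; rewrite /derivable line_fun.
Qed.

Lemma line_is_deriveV f v y df : is_derive (0:R) (1:R) (fun s : R => f (s *: v + y)) df ->
  is_derive y v f df.
Proof.
have E : (fun h : R => h^-1 *: ((f \o shift y) (h *: v) - f y)) =
  (fun h : R => h^-1 *: (((fun s : R => f (s *: v + y)) \o shift 0) (h *: 1)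
      - (fun s : R => f (s *: v + y)) 0)).
  by rewrite -[in LHS](add0r y) -[in LHS](scale0r v) line_fun.
case=> d <-; split; first by move: d; rewrite /derivable -E.
by rewrite /derive E.
Qed.

Lemma is_derive_chain (g : R -> R) u x v du dg :
  is_derive x v u du -> is_derive (u x) 1 g dg ->
  is_derive x v (fun z => g (u z)) (dg * du).
Proof.
move=> [dd <-] dg'.
have H0 : is_derive (0:R) 1 (fun s : R => u (s *: v + x)) ('D_v u x).
  by have := line_is_derive u v x 0; rewrite scale0r add0r; apply.
have dg2 : is_derive ((fun s : R => u (s *: v + x)) 0) 1 g dg.
  by rewrite /= scale0r add0r.
have C := is_derive1_comp dg2 H0.
exact: line_is_deriveV C.
Qed.

Lemma isdM f g x v df dg : is_derive x v f df -> is_derive x v g dg ->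
  is_derive x v (fun z => f z * g z) (f x * dg + g x * df).
Proof. move=> a b; exact: (is_deriveM a b). Qed.

Lemma isdD f g x v df dg : is_derive x v f df -> is_derive x v g dg ->
  is_derive x v (fun z => f z + g z) (df + dg).
Proof. move=> a b; exact: (is_deriveD a b). Qed.

Lemma isdB f g x v df dg : is_derive x v f df -> is_derive x v g dg ->
  is_derive x v (fun z => f z - g z) (df - dg).
Proof. move=> a b; exact: (is_deriveB a b). Qed.

Lemma isd_sum m (h : 'I_m -> V -> R) x v (dh : 'I_m -> R) :
  (forall j, is_derive x v (h j) (dh j)) ->
  is_derive x v (fun z => \sum_(j < m) h j z) (\sum_(j < m) dh j).
Proof.
move=> H; have := @is_derive_sum _ _ _ m h x v dh H.
by rewrite fct_sumE.
Qed.
End V.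
End Gen.
Arguments line_is_derive {R V f v y s0}.
Arguments line_is_deriveV {R V f v y df}.
Arguments is_derive_chain {R V g u x v du dg}.
Arguments isdM {R V f g x v df dg}.
Arguments isdD {R V f g x v df dg}.
Arguments isdB {R V f g x v df dg}.
Arguments isd_sum {R V m h x v dh}.
Local Open Scope classical_set_scope.

Section Gen.
Variable R : realType.
Variable V : normedModType R.
Implicit Types (f u : V -> R) (x v y : V).

Lemma mvt2 f a b x t (U : set V) : 0 < t ->
  (forall s w, 0 <= s <= t -> 0 <= w <= t -> U (s *: a + (w *: b + x))) ->
  (forall y, U y -> derivable f y a) ->
  (forall y, U y -> derivable (fun z => derive f z a) y b) ->
  exists c d, [/\ 0 < c < t, 0 < d < t &
   f (t *: a + (t *: b + x)) - f (t *: a + x) - f (t *: b + x) + f x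
   = derive (fun z => derive f z a) (d *: b + (c *: a + x)) b * t * t].
Proof.
move=> t0 HU da db.
have U1 s : 0 <= s <= t -> U (s *: a + (t *: b + x)).
  by move=> hs; apply: HU => //; rewrite lexx ltW.
have U0 s : 0 <= s <= t -> U (s *: a + x).
  by move=> hs; have := HU s 0 hs; rewrite lexx ltW // scale0r add0r; apply.
pose h := fun s : R => f (s *: a + (t *: b + x)) - f (s *: a + x).
have dh s : 0 <= s <= t -> is_derive s (1:R) h
   (derive f (s *: a + (t *: b + x)) a - derive f (s *: a + x) a).
  move=> hs; apply: isdB; apply: line_is_derive; [exact/da/U1|exact/da/U0].
have [c cI Ec] : exists2 c, c \in `]0, t[%R & h t - h 0 =
   (derive f (c *: a + (t *: b + x)) a - derive f (c *: a + x) a) * (t - 0).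
  apply: (@MVT R h (fun s => derive f (s *: a + (t *: b + x)) a - derive f (s *: a + x) a) 0 t t0).
    move=> s; rewrite in_itv /= => /andP[s0 st]; apply: dh; rewrite !ltW //.
  apply: derivable_within_continuous => s; rewrite in_itv /= => /andP[s0 st].
  by have [] := dh s ltac:(by rewrite s0 st).
move: cI; rewrite in_itv /= => /andP[c0 ct].
have Uc w : 0 <= w <= t -> U (w *: b + (c *: a + x)).
  by move=> hw; rewrite addrCA; apply: HU => //; rewrite !ltW.
pose k := fun w : R => derive f (w *: b + (c *: a + x)) a.
have dk w : 0 <= w <= t -> is_derive w (1:R) k
   (derive (fun z => derive f z a) (w *: b + (c *: a + x)) b).
  by move=> hw; apply: (@line_is_derive R V (fun z => derive f z a)); apply/db/Uc.
have [d dI Ed] : exists2 d, d \in `]0, t[%R & k t - k 0 =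
   derive (fun z => derive f z a) (d *: b + (c *: a + x)) b * (t - 0).
  apply: (@MVT R k (fun w => derive (fun z => derive f z a) (w *: b + (c *: a + x)) b) 0 t t0).
    move=> s; rewrite in_itv /= => /andP[s0 st]; apply: dk; rewrite !ltW //.
  apply: derivable_within_continuous => s; rewrite in_itv /= => /andP[s0 st].
  by have [] := dk s ltac:(by rewrite s0 st).
move: dI; rewrite in_itv /= => /andP[d0 dt].
exists c, d; split; [by rewrite c0 ct|by rewrite d0 dt|].
move: Ec Ed; rewrite /h /k !scale0r !add0r !subr0 => Ec Ed.
rewrite [c *: a + (t *: b + x)]addrCA Ed in Ec.
have -> : f (t *: a + (t *: b + x)) - f (t *: a + x) - f (t *: b + x) + f x =
  f (t *: a + (t *: b + x)) - f (t *: a + x) - (f (t *: b + x) - f x) by ring.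
rewrite Ec; ring.
Qed.

Lemma tri (p q X Y e : R) : `|p - X| < e -> `|q - Y| < e -> X = Y -> `|p - q| < e + e.
Proof.
move=> h1 h2 E; subst Y.
have -> : p - q = (p - X) - (q - X) by ring.
by rewrite (le_lt_trans (ler_normB _ _)) // ltrD.
Qed.

Lemma schwarz f a b x (U : set V) : nbhs x U ->
  (forall y, U y -> derivable f y a) ->
  (forall y, U y -> derivable f y b) ->
  (forall y, U y -> derivable (fun z => derive f z a) y b) ->
  (forall y, U y -> derivable (fun z => derive f z b) y a) ->
  {for x, continuous (fun z => derive (fun w => derive f w a) z b)} ->
  {for x, continuous (fun z => derive (fun w => derive f w b) z a)} ->
  derive (fun w => derive f w a) x b = derive (fun w => derive f w b) x a.
Proof.
move=> UN dfa dfb dab dba cab cba.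
set L1 := derive _ x b; set L2 := derive _ x a.
have key e : 0 < e -> `|L1 - L2| < e + e.
  move=> e0.
  have C1 := cvgr_dist_lt (FF := nbhs_filter x) _ _ cab _ e0.
  have C2 := cvgr_dist_lt (FF := nbhs_filter x) _ _ cba _ e0.
  have N := @filterI _ _ (nbhs_filter x) _ _ UN (@filterI _ _ (nbhs_filter x) _ _ C1 C2).
  have [del del0 Hb] := (nbhs_ballP x _).1 N.
  pose t := del / (`|a| + `|b| + 1).
  have ab0 : 0 < `|a| + `|b| + 1 by rewrite ltr_wpDl // addr_ge0.
  have t0 : 0 < t by rewrite divr_gt0.
  have HB s w : 0 <= s <= t -> 0 <= w <= t -> ball x del (s *: a + (w *: b + x)).
    move=> /andP[s0 st] /andP[w0 wt]; rewrite -ball_normE /ball_ /=.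
    rewrite addrA (addrC _ x) opprD addrA subrr add0r normrN.
    rewrite (le_lt_trans (ler_normD _ _)) // !normrZ (ger0_norm s0) (ger0_norm w0).
    have -> : del = t * (`|a| + `|b| + 1) by rewrite /t divfK // gt_eqF.
    have h1 : s * `|a| <= t * `|a| by rewrite ler_wpM2r.
    have h2 : w * `|b| <= t * `|b| by rewrite ler_wpM2r.
    rewrite !mulrDr mulr1; lra.
  clearbody t.
  have [c1 [d1 [c1I d1I E1]]] := @mvt2 f a b x t _ t0 (fun s w hs hw => proj1 (Hb _ (HB s w hs hw))) dfa dab.
  have HB2 s w : 0 <= s <= t -> 0 <= w <= t -> ball x del (s *: b + (w *: a + x)).
    by move=> hs hw; rewrite addrCA; exact: HB w s hw hs.
  have [c2 [d2 [c2I d2I E2]]] := @mvt2 f b a x t _ t0 (fun s w hs hw => proj1 (Hb _ (HB2 s w hs hw))) dfb dba.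
  have tt0 : t * t != 0 by apply: mulf_neq0; apply: lt0r_neq0.
  have M : f (t *: a + (t *: b + x)) - f (t *: a + x) - f (t *: b + x) + f x =
      f (t *: b + (t *: a + x)) - f (t *: b + x) - f (t *: a + x) + f x.
    rewrite [t *: b + (t *: a + x)]addrCA; ring.
  have E12 := etrans (esym E1) (etrans M E2).
  move: E12; rewrite -!mulrA => E12; have E := mulIf tt0 E12.
  have [_ [B1 _]] := Hb _ (HB2 d1 c1 ltac:(by case/andP: d1I => *; rewrite !ltW) ltac:(by case/andP: c1I => *; rewrite !ltW)).
  have [_ [_ B2]] := Hb _ (HB d2 c2 ltac:(by case/andP: d2I => *; rewrite !ltW) ltac:(by case/andP: c2I => *; rewrite !ltW)).
  exact: tri B1 B2 E.
apply/eqP; rewrite -subr_eq0 -normr_eq0; apply/negPn/negP => ne.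
have d0 : 0 < `|L1 - L2| by rewrite lt_def ne normr_ge0.
have := key (`|L1 - L2| / 4) ltac:(by rewrite divr_gt0).
lra.
Qed.
End Gen.

Local Close Scope classical_set_scope.

Lemma dv (R : realType) (V : normedModType R) (x v : V) (f : V -> R) df :
  is_derive x v f df -> derive f x v = df.
Proof. by case. Qed.

Lemma open_nbhs_of {T : topologicalType} {A : set T} {x : T} : open A -> A x -> nbhs x A.
Proof. by rewrite openE => H Ax; exact: H x Ax. Qed.

Lemma pos_nbhs (R : realType) (r : R) : 0 < r -> \forall s \near r, 0 < s.
Proof. by move=> r0; exact: (@open_gt R 0 r r0). Qed.

Lemma smooth_isd (R : realType) (g : R -> R) (k : nat) (r : R) : smooth_pos g -> 0 < r ->
  is_derive r (1:R) (derive1n k g) (derive1n k.+1 g r).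
Proof.
move=> sg r0; have d := sg k r r0; rewrite derive1nS derive1E; exact: derivableP.
Qed.

Arguments pos_nbhs {R r}.
Arguments smooth_isd {R g} k {r}.
Arguments dv {R V x v f df}.

Lemma nearpos (R : realType) (r : R) (P : R -> Prop) : 0 < r ->
  (forall u, 0 < u -> P u) -> \forall u \near r, P u.
Proof. move=> r0 H; exact: (@filterS _ _ (nbhs_filter r) _ _ H (pos_nbhs r0)). Qed.

Arguments nearpos {R r P}.


Section All.
Variables (R : realType) (n : nat) (Omega : set 'rV[R]_n) (rho : 'rV[R]_n -> R).
Hypotheses (hOmega : open Omega) (hsm : smooth_on Omega rho)
  (hpos : forall x, Omega x -> 0 < rho x).
Variables (K Phi phi F : R -> R).
Hypotheses (hKsmooth : smooth_pos K)
  (hKpos : forall r : R, 0 < r -> 0 < K r)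
  (hPhi : forall r : R, 0 < r ->
            derivable Phi r 1 /\ derive1 Phi r = Num.sqrt (K r))
  (hphi_smooth : smooth_pos phi)
  (hF_smooth : smooth_pos F)
  (hphi : forall r : R, 0 < r ->
            Num.sqrt r * derive1 phi r = Num.sqrt (K r))
  (hF : forall r : R, 0 < r -> derive1 F r = Num.sqrt (K r * r)).



Local Notation e := (ebasis R).

Lemma nearO {y : 'rV[R]_n} {P : 'rV[R]_n -> Prop} : Omega y -> (forall z, Omega z -> P z) ->
  \forall z \near y, P z.
Proof. by move=> Oy H; exact: (@filterS _ _ (nbhs_filter y) _ _ H (open_nbhs_of hOmega Oy)). Qed.

Lemma Dr s i y : Omega y ->
  is_derive y (e i) (iter_partial s rho) (iter_partial (i :: s) rho y).
Proof. by move=> Oy; have [_ d] := hsm s y Oy; exact: derivableP (d i). Qed.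

Lemma Dr0 i y : Omega y -> is_derive y (e i) rho (partial i rho y).
Proof. exact: (Dr [::]). Qed.
Lemma Dr1 i j y : Omega y -> is_derive y (e i) (partial j rho) (partial i (partial j rho) y).
Proof. exact: (Dr [:: j]). Qed.
Lemma Dr2 i j k y : Omega y ->
  is_derive y (e i) (partial j (partial k rho)) (partial i (partial j (partial k rho)) y).
Proof. exact: (Dr [:: j; k]). Qed.

Definition hder (g g1 : R -> R) := forall r : R, 0 < r -> is_derive r (1:R) g (g1 r).

Lemma G1 g g1 j y : hder g g1 -> Omega y ->
  is_derive y (e j) (fun z => g (rho z)) (g1 (rho y) * partial j rho y).
Proof. by move=> hg Oy; apply: is_derive_chain; [exact: Dr0 | exact: hg _ (hpos _ Oy)]. Qed.

Lemma G1v g g1 j y : hder g g1 -> Omega y ->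
  partial j (fun z => g (rho z)) y = g1 (rho y) * partial j rho y.
Proof. by move=> hg Oy; apply: dv; exact: G1. Qed.

Lemma G2 g g1 g2 i j y : hder g g1 -> hder g1 g2 -> Omega y ->
  is_derive y (e i) (partial j (fun z => g (rho z)))
    (g2 (rho y) * partial i rho y * partial j rho y
     + g1 (rho y) * partial i (partial j rho) y).
Proof.
move=> h1 h2 Oy.
have E : \forall z \near y, g1 (rho z) * partial j rho z = partial j (fun z => g (rho z)) z.
  exact: (nearO Oy (fun z Oz => esym (@G1v g g1 j z h1 Oz))).
apply: (near_eq_is_derive E).
apply: is_derive_eq; first exact: isdM (G1 g1 g2 i y h2 Oy) (Dr1 i j y Oy).
cbv beta; ring.
Qed.

Lemma G2v g g1 g2 i j y : hder g g1 -> hder g1 g2 -> Omega y ->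
  partial i (partial j (fun z => g (rho z))) y =
    g2 (rho y) * partial i rho y * partial j rho y
     + g1 (rho y) * partial i (partial j rho) y.
Proof. by move=> h1 h2 Oy; apply: dv; exact: G2. Qed.

Lemma Lapv g g1 g2 y : hder g g1 -> hder g1 g2 -> Omega y ->
  laplacian (fun z => g (rho z)) y =
    \sum_(j < n) (g2 (rho y) * partial j rho y * partial j rho y
     + g1 (rho y) * partial j (partial j rho) y).
Proof. by move=> h1 h2 Oy; apply: eq_bigr => j _; exact: G2v. Qed.

Lemma swap s i j x : Omega x ->
  partial j (partial i (iter_partial s rho)) x = partial i (partial j (iter_partial s rho)) x.
Proof.
move=> Ox.
apply: (@schwarz R _ (iter_partial s rho) (ebasis R i) (ebasis R j) x Omega).
- exact: open_nbhs_of hOmega Ox.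
- by move=> y Oy; exact: (hsm s y Oy).2 i.
- by move=> y Oy; exact: (hsm s y Oy).2 j.
- by move=> y Oy; exact: (hsm (i :: s) y Oy).2 j.
- by move=> y Oy; exact: (hsm (j :: s) y Oy).2 i.
- exact: (hsm [:: j, i & s] x Ox).1.
- exact: (hsm [:: i, j & s] x Ox).1.
Qed.

Lemma swap0 i j x : Omega x ->
  partial j (partial i rho) x = partial i (partial j rho) x.
Proof. exact: (swap [::]). Qed.

Lemma swap1 i j x : Omega x ->
  partial j (partial i (partial j rho)) x = partial i (partial j (partial j rho)) x.
Proof. exact: (swap [:: j]). Qed.
Local Notation p := (derive1 phi).
Local Notation p1 := (derive1 (derive1 phi)).
Local Notation p2 := (derive1 (derive1 (derive1 phi))).
Local Notation F1 := (derive1 F).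
Local Notation F2 := (derive1 (derive1 F)).
Local Notation K1 := (derive1 K).
Local Notation K2 := (derive1 (derive1 K)).

Lemma hK : hder K K1. Proof. move=> s hs; exact: (smooth_isd 0 hKsmooth hs). Qed.
Lemma hK1 : hder K1 K2. Proof. move=> s hs; exact: (smooth_isd 1 hKsmooth hs). Qed.
Lemma hp : hder phi p. Proof. move=> s hs; exact: (smooth_isd 0 hphi_smooth hs). Qed.
Lemma hp1 : hder p p1. Proof. move=> s hs; exact: (smooth_isd 1 hphi_smooth hs). Qed.
Lemma hp2 : hder p1 p2. Proof. move=> s hs; exact: (smooth_isd 2 hphi_smooth hs). Qed.
Lemma hF0 : hder F F1. Proof. move=> s hs; exact: (smooth_isd 0 hF_smooth hs). Qed.
Lemma hF1 : hder F1 F2. Proof. move=> s hs; exact: (smooth_isd 1 hF_smooth hs). Qed.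

Lemma hPh : hder Phi (fun s => Num.sqrt (K s)).
Proof.
move=> s hs; case: (hPhi s hs) => d E; split => //; by rewrite -derive1E E.
Qed.

Lemma hA : hder (fun s => Num.sqrt (K s)) (fun s => (2 * Num.sqrt (K s))^-1 * K1 s).
Proof.
move=> s hs; exact: (is_derive1_comp (is_derive1_sqrt (hKpos s hs)) (hK s hs)).
Qed.

Lemma hF1v s : 0 < s -> F1 s = s * p s.
Proof.
move=> hs; rewrite hF // sqrtrM ?ltW ?hKpos // -hphi //.
by rewrite mulrAC -expr2 sqr_sqrtr ?ltW.
Qed.

Lemma hKv s : 0 < s -> K s = s * (p s * p s).
Proof.
move=> hs; rewrite -[K s]sqr_sqrtr ?ltW ?hKpos // -hphi // exprMn sqr_sqrtr ?ltW //.
Qed.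

Lemma idd (s : R) : is_derive s (1:R) (fun u : R => u) 1.
Proof. exact: is_derive_id. Qed.

Lemma hK1v s : 0 < s -> K1 s = s * (p s * p1 s + p s * p1 s) + p s * p s.
Proof.
move=> hs; rewrite derive1E.
rewrite (near_eq_derive (g := fun u : R => u * (p u * p u)) _ (nearpos hs (fun u hu => hKv u hu))).
apply: dv; apply: is_derive_eq; first exact: isdM (idd s) (isdM (hp1 s hs) (hp1 s hs)).
cbv beta; ring.
Qed.

Lemma hF2v s : 0 < s -> F2 s = p s + s * p1 s.
Proof.
move=> hs; rewrite derive1E.
rewrite (near_eq_derive (g := fun u : R => u * p u) _ (nearpos hs (fun u hu => hF1v u hu))).
apply: dv; apply: is_derive_eq; first exact: isdM (idd s) (hp1 s hs).
cbv beta; ring.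
Qed.

Lemma algK2 (s a b c : R) :
  s * (a * c + b * b + (a * c + b * b)) + (a * b + a * b) * 1 + (a * b + a * b) =
  4 * a * b + 2 * s * b * b + 2 * s * a * c.
Proof. ring. Qed.

Lemma hK2v s : 0 < s -> K2 s =
  4 * p s * p1 s + 2 * s * p1 s * p1 s + 2 * s * p s * p2 s.
Proof.
move=> hs; rewrite derive1E.
rewrite (near_eq_derive (g := fun u : R => u * (p u * p1 u + p u * p1 u) + p u * p u)
   _ (nearpos hs (fun u hu => hK1v u hu))).
have H := isdD (isdM (idd s) (isdD (isdM (hp1 s hs) (hp2 s hs)) (isdM (hp1 s hs) (hp2 s hs))))
              (isdM (hp1 s hs) (hp1 s hs)).
apply: dv; apply: (is_derive_eq H); exact: algK2.
Qed.


Lemma pnear (f g : 'rV[R]_n -> R) x j : (\forall y \near x, f y = g y) ->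
  partial j f x = partial j g x.
Proof. move=> E; exact: near_eq_derive E. Qed.

Lemma pval (f : 'rV[R]_n -> R) x j d : is_derive x (e j) f d -> partial j f x = d.
Proof. exact: dv. Qed.

Lemma algL (s k k1 a b : R) : s != 0 -> s * s = k ->
  s * ((2 * s)^-1 * k1 * a * a + s * b) = k1 * (a * a) * 2^-1 + k * b.
Proof. by move=> s0 <-; field. Qed.

Lemma final_alg {r F0 P P1 P2 Fa Fb Ka Kb Kc Ri Rj Rij Rjj Rijj : R} :
  Fa = r * P -> Fb = P + r * P1 -> Ka = r * (P * P) -> Kb = r * (P * P1 + P * P1) + P * P ->
  Kc = 4 * P * P1 + 2 * r * P1 * P1 + 2 * r * P * P2 ->
  r * (Kb * (Rj * Rj) * 0 + 2^-1 * (Kb * (Rj * Rij + Rj * Rij) + Rj * Rj * (Kc * Ri))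
       + (Ka * Rijj + Rjj * (Kb * Ri))) =
  F0 * (P1 * Ri * Rjj + Rj * (P1 * Rij + Ri * (P2 * Rj)) + (P * Rijj + Rij * (P1 * Rj)))
  + (P1 * Ri * Rj + P * Rij) * (Fa * Rj)
  - ((F0 - r * Fa) * (P1 * Rj * Rij + Rj * (P1 * Rij + Rj * (P2 * Ri)) + (P * Rijj + Rjj * (P1 * Ri)))
     + (P1 * Rj * Rj + P * Rjj) * (Fa * Ri - (r * (Fb * Ri) + Fa * Ri))).
Proof. by move=> -> -> -> -> ->; field. Qed.

Lemma main_sec x (Ox : Omega x) (i : 'I_n) :
    rho x * partial i (fun y => Num.sqrt (K (rho y)) *
                                laplacian (fun z => Phi (rho z)) y) x
    = \sum_(j < n) partial j (fun y => F (rho y) *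
                               partial i (partial j (fun z => phi (rho z))) y) x
      - partial i (fun y => (F (rho y) - rho y * derive1 F (rho y)) *
                             laplacian (fun z => phi (rho z)) y) x.
Proof.
have r0 : 0 < rho x := hpos x Ox.
have LEq : forall y, Omega y -> Num.sqrt (K (rho y)) * laplacian (fun z => Phi (rho z)) y =
   \sum_(j < n) (K1 (rho y) * (partial j rho y * partial j rho y) * 2^-1
                 + K (rho y) * partial j (partial j rho) y).
  move=> y Oy.
  rewrite (Lapv _ _ _ y hPh hA Oy) mulr_sumr.
  apply: eq_bigr => j _.
  cbv beta.
  apply: algL.
    by rewrite sqrtr_eq0 -ltNge hKpos // hpos.
  by rewrite -expr2 sqr_sqrtr // ltW // hKpos // hpos.
rewrite [X in rho x * X = _](pnear _ _ x i (nearO Ox LEq)).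
rewrite [X in rho x * X = _](pval _ x i _ (isd_sum (fun j => isdD
   (isdM (isdM (G1 _ _ i x hK1 Ox) (isdM (Dr1 i j x Ox) (Dr1 i j x Ox)))
         (is_derive_cst (2^-1 : R) x (e i)))
   (isdM (G1 _ _ i x hK Ox) (Dr2 i j j x Ox))))).
under [X in _ = X - _]eq_bigr => j _ do rewrite (pnear _ _ x j (nearO Ox (fun y Oy =>
     congr1 (fun w => F (rho y) * w) (G2v _ _ _ i j y hp hp1 Oy))))
   (pval _ x j _ (isdM (G1 _ _ j x hF0 Ox) (isdD
      (isdM (isdM (G1 _ _ j x hp2 Ox) (Dr1 j i x Ox)) (Dr1 j j x Ox))
      (isdM (G1 _ _ j x hp1 Ox) (Dr2 j i j x Ox))))).
rewrite [X in _ = _ - X](pnear _ _ x i (nearO Ox (fun y Oy =>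
     congr1 (fun w => (F (rho y) - rho y * F1 (rho y)) * w) (Lapv _ _ _ y hp hp1 Oy)))).
rewrite [X in _ = _ - X](pval _ x i _ (isdM
   (isdB (G1 _ _ i x hF0 Ox) (isdM (Dr0 i x Ox) (G1 _ _ i x hF1 Ox)))
   (isd_sum (fun j => isdD
      (isdM (isdM (G1 _ _ i x hp2 Ox) (Dr1 i j x Ox)) (Dr1 i j x Ox))
      (isdM (G1 _ _ i x hp1 Ox) (Dr2 i j j x Ox)))))).
cbv beta; rewrite /cst.
rewrite !mulr_sumr mulr_suml -big_split -sumrB.
apply: eq_bigr => j _.
with_strategy opaque [partial derive1] rewrite (swap0 i j x Ox) (swap1 i j x Ox).
exact: (final_alg (hF1v _ r0) (hF2v _ r0) (hKv _ r0) (hK1v _ r0) (hK2v _ r0)).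
Qed.

End All.

Theorem mainTheorem1 (R : realType) (n : nat) (hn : (0 < n)%N)
  (K Phi phi F : R -> R)
  (hKsmooth : smooth_pos K)
  (hKpos : forall r : R, 0 < r -> 0 < K r)
  (hPhi : forall r : R, 0 < r ->
            derivable Phi r 1 /\ derive1 Phi r = Num.sqrt (K r))
  (hphi_smooth : smooth_pos phi)
  (hF_smooth : smooth_pos F)
  (hphi : forall r : R, 0 < r ->
            Num.sqrt r * derive1 phi r = Num.sqrt (K r))
  (hF : forall r : R, 0 < r -> derive1 F r = Num.sqrt (K r * r))
  (Omega : set 'rV[R]_n) (hOmega : open Omega)
  (rho : 'rV[R]_n -> R)
  (hrho_smooth : smooth_on Omega rho)
  (hrho_pos : forall x, Omega x -> 0 < rho x) :
  forall (x : 'rV[R]_n), Omega x -> forall i : 'I_n,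
    rho x * partial i (fun y => Num.sqrt (K (rho y)) *
                                laplacian (fun z => Phi (rho z)) y) x
    = \sum_(j < n) partial j (fun y => F (rho y) *
                               partial i (partial j (fun z => phi (rho z))) y) x
      - partial i (fun y => (F (rho y) - rho y * derive1 F (rho y)) *
                             laplacian (fun z => phi (rho z)) y) x.
Proof.
move=> x Ox i.
exact: (@main_sec R n Omega rho hOmega hrho_smooth hrho_pos K Phi phi F hKsmooth hKpos hPhi hphi_smooth hF_smooth hphi hF x Ox i).
Qed.
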